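(* Let $G$ be a finite connected graph. Let $\mathcal P_e$ (resp. $\mathcal P_o$) be the set of equivalence classes of prime reduced cycles of $G$ of even (resp. odd) length, and $\mathcal P_a$ the set of equivalence classes of prime reduced alternating cycles of $D_G$. Then: (1) If $C=(e_1,e_2,\dots,e_{2r-1},e_{2r})$ is a prime reduced cycle of $G$ of length $2r$, then $\tilde C=[e_1,e_2^{-1},e_3,\dots,e_{2r-1},e_{2r}^{-1}]$ and $\bar C=[e_1^{-1},e_2,e_3^{-1},\dots,e_{2r-1}^{-1},e_{2r}]$ are prime reduced alternating cycles of $D_G$ of length $2r$. (2) If $C=(e_1,\dots,e_{2r+1})$ is a prime reduced cycle of $G$ of length $2r+1$, then $\tilde C=[e_1,e_2^{-1},\dots,e_{2r+1},e_1^{-1},e_2,\dots,e_{2r+1}^{-1}]$ (the arcs $e_1,\dots,e_{2r+1},e_1,\dots,e_{2r+1}$ with every second arc, starting from the second, replaced by its inverse) is a prime reduced alternating cycle of $D_G$ of length $2(2r+1)$. (3) These assignments induce a bijection from $(\mathcal P_e\times\{1,2\})\cup\mathcal P_o$ onto $\mathcal P_a$, under which each class in $\mathcal P_e$ of length $2r$ corresponds to exactly two classes in $\mathcal P_a$ of length $2r$ and each class in $\mathcal P_o$ of length $2r+1$ corresponds to exactly one class in $\mathcal P_a$ of length $2(2r+1)$.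
   Context: Graphs are finite and simple. For a connected graph $G$, $D_G$ is its symmetric digraph with arc set $D(G)=\{(u,v),(v,u): uv\in E(G)\}$; for $e=(u,v)$, $o(e)=u$, $t(e)=v$, $e^{-1}=(v,u)$. A cycle of length $k$ in $G$ is a sequence $(e_1,\dots,e_k)$ of arcs with $t(e_i)=o(e_{i+1})$ ($1\le i\le k-1$) and $t(e_k)=o(e_1)$; it has backtracking if $e_{i+1}=e_i^{-1}$ for some $i\le k-1$; it is reduced if neither it nor its double $(e_1,\dots,e_k,e_1,\dots,e_k)$ has backtracking; it is prime if it is not $B^r$ for a cycle $B$ and $r\ge 2$; two cycles are equivalent if one is a cyclic shift of the other. An alternating walk of length $r$ in $D_G$ is a sequence $[e_1,\dots,e_r]$ of arcs with vertices $v_0,\dots,v_r$ such that either $e_i=(v_{i-1},v_i)$ for odd $i$ and $e_i=(v_i,v_{i-1})$ for even $i$, or $e_i=(v_i,v_{i-1})$ for odd $i$ and $e_i=(v_{i-1},v_i)$ for even $i$. It has backtracking if $e_{i+1}=e_i$ for some $i\le r-1$. An alternating cycle is an alternating walk of even length with $v_0=v_r$; it has a tail if $e_r=e_1$; it is reduced if it has neither backtracking nor a tail. Equivalence (cyclic shift of arc sequence), multiples and primality are as for cycles. *)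

(* Defs.v *)
From mathcomp Require Import all_boot.
Set Implicit Arguments. Unset Strict Implicit. Unset Printing Implicit Defensive.

Section Graphs.
Variable T : finType.
(* A finite simple graph is a symmetric irreflexive relation e : rel T.
   Arcs of D_G are pairs (u,v) with e u v; o(a) = a.1, t(a) = a.2. *)
Variable e : rel T.

Definition is_arc (a : T * T) : bool := e a.1 a.2.
Definition ainv (a : T * T) : T * T := (a.2, a.1).

Definition is_cycle (c : seq (T * T)) : bool :=
  if c is a :: s then
    all is_arc c && path (fun x y => x.2 == y.1) a s && ((last a s).2 == a.1)
  else false.

Definition has_backtracking (c : seq (T * T)) : bool :=
  has (fun p => p.2 == ainv p.1) (zip c (behead c)).

Definition reduced (c : seq (T * T)) : bool :=
  ~~ has_backtracking c && ~~ has_backtracking (c ++ c).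

Definition cpower (B : seq (T * T)) (r : nat) : seq (T * T) := flatten (nseq r B).

Definition prime_cycle (c : seq (T * T)) : Prop :=
  ~ exists (B : seq (T * T)) (r : nat), [/\ is_cycle B, 1 < r & c = cpower B r].

Definition cyc_equiv (c c' : seq (T * T)) : Prop := exists n, c' = rot n c.

(* Alternating walk [e_1,...,e_r] with vertices v_0,...,v_r (v given as a
   function nat -> T; only v_0..v_r matter).  Indices are 0-based below:
   the arc w_i is e_{i+1}. *)
Definition alt_walk_vtx (w : seq (T * T)) (v : nat -> T) : Prop :=
  all is_arc w /\
  ((forall i, i < size w ->
      nth (v 0, v 0) w i = if odd i then (v i.+1, v i) else (v i, v i.+1))
   \/
   (forall i, i < size w ->
      nth (v 0, v 0) w i = if odd i then (v i, v i.+1) else (v i.+1, v i))).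

Definition alt_walk (w : seq (T * T)) : Prop := exists v, alt_walk_vtx w v.

Definition alt_cycle (w : seq (T * T)) : Prop :=
  0 < size w /\ ~~ odd (size w) /\
  exists v, alt_walk_vtx w v /\ v 0 = v (size w).

Definition alt_backtracking (w : seq (T * T)) : bool :=
  has (fun p => p.2 == p.1) (zip w (behead w)).

Definition alt_tail (w : seq (T * T)) : bool :=
  if w is a :: s then last a s == a else false.

Definition alt_reduced (w : seq (T * T)) : bool :=
  ~~ alt_backtracking w && ~~ alt_tail w.

Definition alt_prime (w : seq (T * T)) : Prop :=
  ~ exists (B : seq (T * T)) (r : nat), [/\ alt_cycle B, 1 < r & w = cpower B r].

(* alt_flip b c inverts the arcs at 0-based positions i with odd i (+) b.
   tilde C = alt_flip false C = [e_1, e_2^{-1}, e_3, ...],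
   bar C   = alt_flip true C  = [e_1^{-1}, e_2, e_3^{-1}, ...]. *)
Definition alt_flip (b : bool) (c : seq (T * T)) : seq (T * T) :=
  [seq if odd p.1 (+) b then ainv p.2 else p.2 | p <- zip (iota 0 (size c)) c].

Definition tildeC (c : seq (T * T)) := alt_flip false c.
Definition barC (c : seq (T * T)) := alt_flip true c.
Definition tildeC_odd (c : seq (T * T)) := alt_flip false (c ++ c).

(* representatives of the classes assigned to the class of c *)
Definition images (c : seq (T * T)) : seq (seq (T * T)) :=
  if odd (size c) then [:: tildeC_odd c] else [:: tildeC c; barC c].

Definition prc (c : seq (T * T)) : Prop :=
  [/\ is_cycle c, reduced c & prime_cycle c].

Definition prac (w : seq (T * T)) : Prop :=
  [/\ alt_cycle w, alt_reduced w & alt_prime w].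

End Graphs.

(* Main.v *)
Require Import Defs.
From mathcomp Require Import all_boot zify.
From Stdlib Require Import Classical.
Set Implicit Arguments. Unset Strict Implicit. Unset Printing Implicit Defensive.

Section Aux.
Variable T : finType.
Variable x0 : T * T.
Implicit Types s c w B : seq (T * T).

Definition fs s i := nth x0 s (i %% size s).
Definition fl (b : bool) (i : nat) (a : T * T) := if odd i (+) b then ainv a else a.
Definition cyc := fun x y : T * T => x.2 == y.1.

Lemma ainvK (a : T * T) : ainv (ainv a) = a. Proof. by case: a. Qed.

Lemma size_flip b c : size (alt_flip b c) = size c.
Proof. by rewrite /alt_flip size_map size_zip size_iota minnn. Qed.

Lemma nth_flip b c i : i < size c -> nth x0 (alt_flip b c) i = fl b i (nth x0 c i).
Proof.
move=> hi; rewrite /alt_flip (nth_map (0, x0)); last by rewrite size_zip size_iota minnn.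
by rewrite nth_zip ?size_iota // nth_iota.
Qed.

Lemma fs_mod s i : fs s (i %% size s) = fs s i.
Proof. by rewrite /fs modn_mod. Qed.

Lemma fs_addN s i : fs s (i + size s) = fs s i.
Proof. by rewrite /fs modnDr. Qed.

Lemma fs_addMN s i m : fs s (i + m * size s) = fs s i.
Proof. by rewrite /fs addnC modnMDl. Qed.

Lemma fs_small s i : i < size s -> fs s i = nth x0 s i.
Proof. by move=> h; rewrite /fs modn_small. Qed.

Lemma fs_eq s t : size s = size t -> (forall i, fs s i = fs t i) -> s = t.
Proof.
move=> hs h; apply: (eq_from_nth (x0 := x0)) => // i hi.
by rewrite -fs_small // h fs_small // -hs.
Qed.

Lemma fs_flip b c i : 0 < size c -> ~~ odd (size c) -> fs (alt_flip b c) i = fl b i (fs c i).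
Proof.
move=> h0 he.
rewrite /fs size_flip nth_flip ?ltn_pmod // /fl odd_mod //; exact: negbTE.
Qed.

Lemma fl_add2 b i m : fl b (i + m.*2) = fl b i.
Proof. by rewrite /fl oddD odd_double addbF. Qed.

Lemma fl_inj b i : injective (fl b i).
Proof. by move=> x y; rewrite /fl; case: ifP => _ // h; rewrite -(ainvK x) h ainvK. Qed.

Lemma fl_neg b i a : fl (~~ b) i a = ainv (fl b i a).
Proof. by rewrite /fl addbN; case: (odd i (+) b); rewrite ?ainvK. Qed.

Lemma fl_S b i a : fl b i.+1 a = ainv (fl b i a).
Proof. by rewrite /fl /= addNb; case: (odd i (+) b); rewrite ?ainvK. Qed.

Lemma fl_addn b i n a : fl b (i + n) a = fl (b (+) odd n) i a.
Proof. by rewrite /fl oddD -addbA (addbC (odd n)). Qed.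

Lemma nth_cpower B r i : i < size B * r -> nth x0 (cpower B r) i = nth x0 B (i %% size B).
Proof.
elim: r i => [|r IH] i; first by rewrite muln0.
move=> hi; rewrite /cpower /= nth_cat -/(cpower B r).
case: ifP => h; first by rewrite modn_small.
rewrite IH; last by move: hi; rewrite mulnS; lia.
have hB : size B <= i by rewrite leqNgt h.
by rewrite -{2}(subnK hB) modnDr.
Qed.

Lemma size_cpower B r : size (cpower B r) = size B * r.
Proof. elim: r => [|r IH]; first by rewrite muln0. by rewrite /cpower /= size_cat -/(cpower B r) IH mulnS. Qed.

Lemma fs_cpower B r i : 0 < r -> fs (cpower B r) i = fs B i.
Proof.
move=> hr; case: (posnP (size B)) => hB.
  move/size0nil: hB => ->; suff -> : cpower [::] r = [::] :> seq (T * T) by [].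
  by elim: r {hr} => // r IH; rewrite /cpower /= -/(cpower [::] r) IH.
rewrite /fs size_cpower nth_cpower; last by rewrite ltn_pmod // muln_gt0 hB.
by rewrite (modn_dvdm _ (dvdn_mulr r (dvdnn (size B)))).
Qed.

Lemma cpower2 B : cpower B 2 = B ++ B.
Proof. by rewrite /cpower /= cats0. Qed.

Lemma cpower1 B : cpower B 1 = B.
Proof. by rewrite /cpower /= cats0. Qed.

Lemma fs_rot n s i : n <= size s -> fs (rot n s) i = fs s (i + n).
Proof.
move=> hn; case: (posnP (size s)) => h0.
  by move: h0 => /size0nil ->; rewrite rot_oversize // /fs /= !nth_nil.
rewrite /fs size_rot; set j := i %% size s.
have hj : j < size s by rewrite ltn_pmod.
rewrite -modnDml -/j /rot nth_cat size_drop.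
clearbody j.
case: ifP => h.
  by rewrite nth_drop modn_small ?(addnC j) //; lia.
rewrite nth_take; last by lia.
have -> : j + n = size s + (j - (size s - n)) by lia.
by rewrite modnDl modn_small //; lia.
Qed.


Lemma is_cycleE (e : rel T) c :
  is_cycle e c = [&& c != [::], all (is_arc e) c & cycle cyc c].
Proof. by case: c => //= a s; rewrite rcons_path !andbA. Qed.

Lemma cycle_nth c : 0 < size c ->
  cycle cyc c <-> (forall i, i < size c -> (nth x0 c i).2 = (nth x0 c (i.+1 %% size c)).1).
Proof.
case: c => // a s _; rewrite /=.
split.
- move/(pathP x0) => h i hi.
  have := h i; rewrite size_rcons => /(_ hi) /eqP.
  rewrite -rcons_cons nth_rcons [i < _]hi.
  have [hs|hs] := ltnP i (size s).
    by rewrite nth_rcons hs modn_small.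
  have -> : i = size s by move: hi hs => /=; lia.
  by rewrite nth_rcons ltnn eqxx modnn.
- move=> h; apply/(pathP x0) => i; rewrite size_rcons => hi.
  rewrite -rcons_cons nth_rcons [i < _]hi; apply/eqP; rewrite (h i hi).
  have [hs|hs] := ltnP i (size s).
    by rewrite nth_rcons hs modn_small.
  have -> : i = size s by move: hi hs => /=; lia.
  by rewrite nth_rcons ltnn eqxx modnn.
Qed.

Lemma fsS s i : fs s i.+1 = fs s (i %% size s).+1.
Proof. by rewrite /fs -addn1 -modnDml addn1. Qed.

Lemma cycle_fs c : 0 < size c ->
  cycle cyc c <-> (forall i, (fs c i).2 = (fs c i.+1).1).
Proof.
move=> h0; rewrite cycle_nth //; split=> h i.
- by rewrite fsS /fs h // ltn_pmod.
- move=> hi; have := h i; by rewrite /fs modn_small.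
Qed.

Lemma hasz (R : T * T -> T * T -> bool) s :
  has (fun p => R p.1 p.2) (zip s (behead s)) <->
  exists i, i.+1 < size s /\ R (nth x0 s i) (nth x0 s i.+1).
Proof.
split.
- move/(has_nthP (x0, x0)) => [i hi]; rewrite nth_zip_cond hi /= nth_behead => hR.
  by exists i; split=> //; move: hi; rewrite size_zip size_behead; lia.
- move=> [i [hi hR]]; apply/(has_nthP (x0, x0)); exists i.
    by rewrite size_zip size_behead; lia.
  by rewrite nth_zip_cond size_zip size_behead ifT /= ?nth_behead //; lia.
Qed.

Lemma nth_ss s k : k < (size s).*2 -> nth x0 (s ++ s) k = fs s k.
Proof.
move=> hk; rewrite -cpower2 -(fs_cpower _ _ (r := 2)) // fs_small //.
by rewrite size_cpower muln2.
Qed.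

Lemma reducedP s : 0 < size s ->
  reduced s <-> ~ exists i, fs s i.+1 = ainv (fs s i).
Proof.
move=> h0; rewrite /reduced /has_backtracking; split.
- case/andP=> _ /negP h [i hi]; apply: h.
  apply/(hasz (fun a b => b == ainv a)); exists (i %% size s).
  rewrite size_cat !nth_ss; try (have := ltn_pmod i h0; lia).
  split; first by have := ltn_pmod i h0; lia.
  by rewrite fs_mod -fsS hi.
- move=> h; apply/andP; split; apply/negP.
  + move/(hasz (fun a b => b == ainv a)) => [i [hi /eqP hR]]; apply: h; exists i.
    by rewrite !fs_small //; lia.
  + move/(hasz (fun a b => b == ainv a)) => [i [hi /eqP hR]]; apply: h; exists i.
    rewrite size_cat in hi.
    have h1 : i.+1 < (size s).*2 by lia.
    have h2 : i < (size s).*2 by lia.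
    by rewrite !nth_ss in hR.
Qed.

Lemma alt_reducedP w : 0 < size w ->
  alt_reduced w <-> ~ exists i, fs w i.+1 = fs w i.
Proof.
move=> h0; rewrite /alt_reduced /alt_backtracking; split.
- case/andP=> /negP h1 /negP h2 [i hi].
  set j := i %% size w.
  have hj : j < size w by rewrite ltn_pmod.
  have e1 : fs w j = fs w i by rewrite fs_mod.
  have e2 : fs w j.+1 = fs w i.+1 by rewrite [RHS]fsS.
  clearbody j.
  have [hl|hl] := ltnP j.+1 (size w).
    apply: h1; apply/(hasz (fun a b => b == a)); exists j; split=> //.
    by rewrite -!fs_small // e1 e2 hi.
  have hj' : j = (size w).-1 by lia.
  apply: h2; clear h1; case: w h0 hj hl hj' e1 e2 hi => // a s' _ hj hl hj' e1 e2 hi.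
  rewrite /alt_tail (last_nth x0).
  rewrite hj' /= in e1 e2.
  apply/eqP; rewrite -(@fs_small (a :: s')) // e1 -hi -e2 /fs /= modnn //.
- move=> h; apply/andP; split; apply/negP.
  + move/(hasz (fun a b => b == a)) => [i [hi /eqP hR]]; apply: h; exists i.
    by rewrite !fs_small //; lia.
  + case: w h0 h => // a s' _ h; rewrite /alt_tail (last_nth x0) => /eqP ht.
    apply: h; exists (size s').
    rewrite /fs /= modnn modn_small // -ht (set_nth_default a) //.
Qed.

Definition Pk s k := forall i, fs s i = fs s (i + k).

Lemma Pk_sub s a b : Pk s a -> Pk s b -> b <= a -> Pk s (a - b).
Proof. by move=> ha hb hab i; rewrite [RHS]hb -addnA subnK // -ha. Qed.

Lemma Pk_gcd s a b : Pk s a -> Pk s b -> Pk s (gcdn a b).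
Proof.
move: {2}(a + b) (leqnn (a + b)) => n; elim: n a b => [|n IH] a b.
  move=> h; have E : a = 0 by lia.
  by rewrite E => ha hb; rewrite gcd0n; exact: hb.
move=> hn ha hb.
case: (posnP a) => [->|a0]; first by rewrite gcd0n.
case: (posnP b) => [->|b0]; first by rewrite gcdn0.
have [hab|hab] := leqP b a.
  have -> : gcdn a b = gcdn (a - b) b.
    by rewrite -{1}(subnK hab) gcdnC gcdnDr gcdnC.
  apply: IH; [lia | exact: Pk_sub | done].
have hab' : a <= b by lia.
have -> : gcdn a b = gcdn a (b - a).
  by rewrite -{1}(subnK hab') gcdnDr.
apply: IH; [lia | done | exact: Pk_sub].
Qed.

Lemma Pk_N s : Pk s (size s).
Proof. by move=> i; rewrite fs_addN. Qed.

Lemma Pk_mul s k m : Pk s k -> Pk s (m * k).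
Proof.
move=> hk; elim: m => [|m IH] i; first by rewrite mul0n addn0.
by rewrite mulSn addnA -IH -hk.
Qed.

Lemma transfer s t n k : 0 < size s -> (forall i, fs t i = fs s (i + n)) -> Pk t k -> Pk s k.
Proof.
move=> h0 ht hk j.
have hn : n <= n * size s by rewrite leq_pmulr.
rewrite -(fs_addMN s j n).
have -> : j + n * size s = (j + n * size s - n) + n by lia.
rewrite -ht hk ht.
have -> : j + n * size s - n + k + n = (j + k) + n * size s by lia.
by rewrite fs_addMN.
Qed.

Lemma all_cpower (a : pred (T * T)) B r : 0 < r -> all a (cpower B r) = all a B.
Proof.
case: r => // r _; elim: r => [|r IH]; first by rewrite cpower1.
by rewrite /cpower /= all_cat -/(cpower B r.+1) IH andbb.
Qed.

Lemma is_cycle_cpower (e : rel T) B r : 0 < r -> is_cycle e (cpower B r) = is_cycle e B.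
Proof.
move=> hr; rewrite !is_cycleE all_cpower //.
have hs : (cpower B r != [::]) = (B != [::]).
  by rewrite -!size_eq0 size_cpower muln_eq0; case: r hr => // r _; rewrite orbF.
rewrite hs; case: (B =P [::]) => //= /eqP hB.
have h0 : 0 < size B by rewrite lt0n size_eq0.
have h1 : 0 < size (cpower B r) by rewrite size_cpower muln_gt0 h0.
congr (_ && _); apply/idP/idP => /cycle_fs h; apply/cycle_fs => // i.
- by have := h h1 i; rewrite !fs_cpower.
- by rewrite !fs_cpower //; apply: h.
Qed.

Lemma notprime_period (e : rel T) s k : is_cycle e s -> 0 < k < size s -> Pk s k ->
  ~ prime_cycle e s.
Proof.
move=> hc /andP[k0 kN] hk; apply.
set g := gcdn k (size s).
have hg : Pk s g by apply: Pk_gcd => //; exact: Pk_N.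
have g0 : 0 < g by rewrite gcdn_gt0 k0.
have gk : g <= k by apply: dvdn_leq => //; exact: dvdn_gcdl.
have gd : g %| size s by exact: dvdn_gcdr.
have N0 : 0 < size s by lia.
set r := size s %/ g.
have hr : size s = g * r by rewrite /r mulnC divnK.
have r1 : 1 < r.
  case: r hr => [|[|r]] hr //; by move: hr; rewrite ?muln0 ?muln1; lia.
have es : s = cpower (take g s) r.
  apply: (fs_eq); first by rewrite size_cpower size_takel; lia.
  move=> i; rewrite fs_cpower; last by lia.
  have hgs : size (take g s) = g by rewrite size_takel; lia.
  have -> : fs s i = fs s (i %% g).
    by rewrite {1}(divn_eq i g) addnC -(@Pk_mul s g (i %/ g) hg).
  rewrite {2}/fs hgs nth_take ?ltn_pmod // fs_small //.
  by have := ltn_pmod i g0; lia.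
exists (take g s), r; split=> //.
by rewrite -(is_cycle_cpower e _ (ltnW r1)) -es.
Qed.

Lemma fl_ainv b i a : fl b i (ainv a) = ainv (fl b i a).
Proof. by rewrite /fl; case: (odd i (+) b). Qed.

Lemma arc_ainv (e : rel T) : symmetric e -> forall a, is_arc e (ainv a) = is_arc e a.
Proof. by move=> hs [u v]; rewrite /is_arc /= hs. Qed.

Lemma arc_fl (e : rel T) : symmetric e -> forall b i a, is_arc e (fl b i a) = is_arc e a.
Proof. by move=> hs b i a; rewrite /fl; case: ifP => _ //; rewrite arc_ainv. Qed.

Lemma alt_cycle_flip (e : rel T) b D : symmetric e -> is_cycle e D -> ~~ odd (size D) ->
  alt_cycle e (alt_flip b D).
Proof.
move=> hs; rewrite is_cycleE => /and3P[hne ha hc] hev.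
have h0 : 0 < size D by rewrite lt0n size_eq0.
have hl := (cycle_fs h0).1 hc.
rewrite /alt_cycle size_flip; split=> //; split=> //.
exists (fun i => (fs D i).1); split; last by rewrite -(add0n (size D)) fs_addN. split.
  apply/(all_nthP x0) => i; rewrite size_flip => hi.
  by rewrite nth_flip // arc_fl //; exact: (all_nthP x0 ha).
case: b; [right|left] => i; rewrite size_flip => hi;
  rewrite (set_nth_default x0) ?size_flip // nth_flip // -fs_small // -hl /fl;
  by case: (odd i); case: (fs D i).
Qed.

Lemma alt_reduced_flip b (D : seq (T * T)) : 0 < size D -> ~~ odd (size D) -> reduced D ->
  alt_reduced (alt_flip b D).
Proof.
move=> h0 hev /(reducedP h0) hr; apply/alt_reducedP; first by rewrite size_flip.
move=> [i]; rewrite !fs_flip // fl_S -fl_ainv => /fl_inj hi; apply: hr; exists i.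
by rewrite -hi ainvK.
Qed.

Lemma alt_prime_flip (e : rel T) b c X : is_cycle e c -> prime_cycle e c ->
  (forall i, fs X i = fs c i) -> ~~ odd (size X) ->
  size X = size c \/ (size X = (size c).*2 /\ odd (size c)) ->
  alt_prime e (alt_flip b X).
Proof.
move=> hc hp hX hev hsz [B [r [hB hr hw]]].
case: hB => hB0 [hBe _].
have hN : size X = size B * r by rewrite -size_cpower -hw size_flip.
have hX0 : 0 < size X by rewrite hN muln_gt0 hB0; lia.
apply: (notprime_period hc (k := size B)) => //.
  apply/andP; split=> //.
  case: hsz => [hs|[hs ho]].
    have : size B * 2 <= size B * r by rewrite leq_mul2l hr orbT.
    by lia.
  have : size B * 2 <= size B * r by rewrite leq_mul2l hr orbT.
  move=> h2; rewrite ltn_neqAle; apply/andP; split; last by lia.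
  by apply/eqP => E; move: hBe; rewrite E ho.
move=> i.
have E : forall j, fs (alt_flip b X) j = fl b j (fs c j) by move=> j; rewrite fs_flip // hX.
have := E (i + size B); rewrite hw fs_cpower ?(ltnW hr) // fs_addN -(fs_cpower _ _ (ltnW hr)) -hw E.
have -> : size B = (size B)./2.*2 by rewrite even_halfK.
by rewrite fl_add2 => /fl_inj.
Qed.

Lemma anti_bt (s t : seq (T * T)) n : 0 < size s -> 0 < size t -> cycle cyc s -> cycle cyc t ->
  (forall i, fs s i = ainv (fs t (i + n))) -> exists j, fs t j.+1 = ainv (fs t j).
Proof.
move=> hs ht /(cycle_fs hs) ls /(cycle_fs ht) lt h; exists n.
have := ls 0; rewrite !h add0n add1n /ainv /= => e1.
have := lt n; move: e1.
by case: (fs t n) => a b; case: (fs t n.+1) => c d /= -> ->.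
Qed.

Lemma rot_norm (s : seq (T * T)) n : exists2 m, m <= size s & rot n s = rot m s.
Proof.
have [h|h] := leqP n (size s); first by exists n.
by exists 0; rewrite // rot0 rot_oversize // ltnW.
Qed.

Lemma fl_fl b i a : fl b i (fl b i a) = a.
Proof. by rewrite /fl; case: (odd i (+) b); rewrite ?ainvK. Qed.

Lemma cpower_mul B r q : 0 < r -> 0 < q -> cpower (cpower B q) r = cpower B (q * r).
Proof.
move=> hr hq; apply: fs_eq; first by rewrite !size_cpower mulnA.
by move=> i; rewrite !fs_cpower // muln_gt0 hr hq.
Qed.

Lemma root_exists (e : rel T) c : is_cycle e c ->
  exists B r, [/\ 0 < r, c = cpower B r, is_cycle e B & prime_cycle e B].
Proof.
move: {2}(size c) (leqnn (size c)) => n; elim: n c => [|n IH] c hn hc.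
  by move: hc; rewrite is_cycleE -size_eq0; case: (size c) hn.
case: (classic (prime_cycle e c)) => hp.
  by exists c, 1; rewrite cpower1.
have [B [r [hB hr hcB]]] : exists B r, [/\ is_cycle e B, 1 < r & c = cpower B r].
  by apply: NNPP.
have hB0 : 0 < size B by move: hB; rewrite is_cycleE lt0n size_eq0; case/andP.
have hsz : size B <= n.
  have : size c = size B * r by rewrite hcB size_cpower.
  have : size B * 2 <= size B * r by rewrite leq_mul2l hr orbT.
  by lia.
have [D [q [hq hBD hD hpD]]] := IH B hsz hB.
exists D, (q * r); split=> //; first by rewrite muln_gt0 hq; lia.
by rewrite hcB hBD cpower_mul //; lia.
Qed.

Lemma images_fs c x : 0 < size c -> x \in images c ->
  exists bx, (forall i, fs x i = fl bx i (fs c i)) /\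
             size x = (if odd (size c) then (size c).*2 else size c).
Proof.
move=> h0; rewrite /images; case: ifP => ho.
  rewrite inE => /eqP ->; exists false; split; last by rewrite size_flip size_cat addnn.
  move=> i; rewrite fs_flip ?size_cat ?addnn ?odd_double //; last by lia.
  by rewrite -cpower2 fs_cpower.
rewrite !inE => /orP[] /eqP ->; [exists false | exists true]; split;
  by [move=> i; rewrite fs_flip // ho | rewrite size_flip].
Qed.

Section Parts.
Variable e : rel T.
Hypothesis e_sym : symmetric e.
Hypothesis e_irr : irreflexive e.

Lemma prc_pos c : prc e c -> 0 < size c.
Proof. by case=> hc _ _; move: hc; rewrite is_cycleE lt0n size_eq0; case/andP. Qed.

Lemma part1 c : prc e c -> ~~ odd (size c) ->
  [/\ prac e (tildeC c), size (tildeC c) = size c,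
      prac e (barC c) & size (barC c) = size c].
Proof.
move=> hp hev; have h0 := prc_pos hp; case: hp => hc hr hpr.
have H b : prac e (alt_flip b c).
  split; [exact: alt_cycle_flip | exact: alt_reduced_flip |].
  by apply: (alt_prime_flip hc hpr) => //; left.
by split; rewrite ?size_flip //; apply: H.
Qed.

Lemma part2 c : prc e c -> odd (size c) ->
  prac e (tildeC_odd c) /\ size (tildeC_odd c) = 2 * size c.
Proof.
move=> hp ho; have h0 := prc_pos hp; case: hp => hc hr hpr.
have hev : ~~ odd (size (c ++ c)) by rewrite size_cat addnn odd_double.
have hfs : forall i, fs (c ++ c) i = fs c i by move=> i; rewrite -cpower2 fs_cpower.
have hcc : is_cycle e (c ++ c) by rewrite -cpower2 is_cycle_cpower.
have h00 : 0 < size (c ++ c) by rewrite size_cat; lia.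
split; last by rewrite /tildeC_odd size_flip size_cat; lia.
split; [exact: alt_cycle_flip | apply: alt_reduced_flip => // |].
  apply/reducedP => // [[i]]; rewrite !hfs => hi.
  by move/(reducedP h0): hr; apply; exists i.
apply: (alt_prime_flip hc hpr) => //.
by right; rewrite size_cat addnn.
Qed.

Lemma part3a c c' : prc e c -> prc e c' -> cyc_equiv c c' ->
  forall x, x \in images c -> exists2 y, y \in images c' & cyc_equiv x y.
Proof.
move=> hp hp' [n hn] x hx; have h0 := prc_pos hp.
have [m hm hnm] := rot_norm c n; rewrite hnm in hn; subst c'.
have hfs : forall i, fs (rot m c) i = fs c (i + m) by move=> i; rewrite fs_rot.
rewrite /images size_rot in hx *.
case: ifP hx => ho.
  rewrite inE => /eqP ->.
  exists (tildeC_odd (rot m c)); first by rewrite inE.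
  pose m' := if odd m then m + size c else m.
  have hm' : m' <= size (tildeC_odd c).
    by rewrite /tildeC_odd size_flip size_cat /m'; case: (odd m); lia.
  have hev : ~~ odd m' by rewrite /m'; case hmo: (odd m); rewrite ?hmo // oddD hmo ho.
  exists m'; apply: fs_eq; first by rewrite size_rot /tildeC_odd !size_flip !(size_cat (rot m c)) size_cat size_rot.
  have hs1 : size (rot m c ++ rot m c) = (size c).*2 by rewrite size_cat size_rot addnn.
  have hs2 : size (c ++ c) = (size c).*2 by rewrite size_cat addnn.
  move=> i; rewrite fs_rot // /tildeC_odd !fs_flip ?hs1 ?hs2 ?odd_double //; try lia.
  rewrite -!cpower2 !fs_cpower // hfs fl_addn (negbTE hev) addbF.
  by rewrite /m'; case: (odd m); rewrite // addnA fs_addN.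
rewrite !inE => hx.
have [b hb] : exists b, x = alt_flip b c by case/orP: hx => /eqP ->; [exists false | exists true].
subst x; clear hx; exists (alt_flip (b (+) odd m) (rot m c)).
  by case: b; case: (odd m); rewrite /tildeC /barC /= !inE eqxx ?orbT.
exists m; apply: fs_eq; first by rewrite size_rot !size_flip size_rot.
move=> i; rewrite fs_rot ?size_flip // !fs_flip ?size_rot ?ho //.
by rewrite hfs fl_addn.
Qed.

Lemma part3b c : prc e c -> ~~ odd (size c) -> ~ cyc_equiv (tildeC c) (barC c).
Proof.
move=> hp hev [n hn]; have h0 := prc_pos hp; case: hp => hc hr hpr.
have [m hm hnm] := rot_norm (tildeC c) n; rewrite hnm in hn.
rewrite size_flip in hm.
have E : forall i, fl true i (fs c i) = fl (odd m) i (fs c (i + m)).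
  move=> i; rewrite -fs_flip // -/(barC c) hn fs_rot ?size_flip // fs_flip //.
  by rewrite fl_addn.
case hmo : (odd m) in E.
  apply: (notprime_period hc (k := m) _ _ hpr).
    apply/andP; split; first by case: m hmo {hm hnm hn E}.
    rewrite ltn_neqAle hm andbT; apply/eqP => Em; move: hev; by rewrite -Em hmo.
  by move=> i; apply: (fl_inj (E i)).
have E2 : forall i, fs c i = ainv (fs c (i + m)).
  move=> i; have := E i; rewrite -[true]/(~~ false) fl_neg -fl_ainv => /fl_inj <-.
  by rewrite ainvK.
have hcyc : cycle cyc c by move: hc; rewrite is_cycleE; case/and3P.
have [j hj] := anti_bt h0 h0 hcyc hcyc E2.
by move/(reducedP h0): hr; apply; exists j.
Qed.

Lemma prc_cyc c : prc e c -> cycle cyc c.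
Proof. by case=> hc _ _; move: hc; rewrite is_cycleE; case/and3P. Qed.

Lemma part3c c c' x y : prc e c -> prc e c' ->
  x \in images c -> y \in images c' -> cyc_equiv x y -> cyc_equiv c c'.
Proof.
move=> hp hp' hx hy [n hn].
have h0 := prc_pos hp; have h0' := prc_pos hp'.
have [bx [fx sx]] := images_fs h0 hx.
have [by_ [fy sy]] := images_fs h0' hy.
have [m hm hnm] := rot_norm x n; rewrite hnm in hn; subst y.
have E : forall i, fl by_ i (fs c' i) = fl (bx (+) odd m) i (fs c (i + m)).
  by move=> i; rewrite -fy fs_rot // fx fl_addn.
have hsz : size (rot m x) = size x by rewrite size_rot.
rewrite sx sy in hsz.
case hb : (by_ == bx (+) odd m).
  move/eqP: hb => hb; rewrite hb in E.
  have F : forall i, fs c' i = fs c (i + m) by move=> i; apply: (fl_inj (E i)).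
  case ho : (odd (size c)) hsz; case ho' : (odd (size c')) => hsz.
  - exists (m %% size c); apply: fs_eq; first by rewrite size_rot; move: hsz; rewrite -!addnn; lia.
    by move=> i; rewrite fs_rot ?(ltnW (ltn_pmod _ h0)) // F -[RHS]fs_mod modnDmr fs_mod.
  - exfalso; case: hp' => hc' _ hpr'.
    apply: (notprime_period hc' (k := size c) _ _ hpr').
      by apply/andP; split=> //; move: hsz h0; rewrite -!addnn; lia.
    by move=> i; rewrite !F addnAC fs_addN.
  - exfalso; case: hp => hc _ hpr.
    apply: (notprime_period hc (k := size c') _ _ hpr).
      by apply/andP; split=> //; move: hsz h0'; rewrite -!addnn; lia.
    exact: (transfer h0 F (Pk_N c')).
  - exists (m %% size c); apply: fs_eq; first by rewrite size_rot hsz.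
    by move=> i; rewrite fs_rot ?(ltnW (ltn_pmod _ h0)) // F -[RHS]fs_mod modnDmr fs_mod.
exfalso.
have G : forall i, fs c' i = ainv (fs c (i + m)).
  move=> i; have := E i.
  have -> : by_ = ~~ (bx (+) odd m) by move/negbT: hb; case: (by_); case: (bx (+) odd m).
  by rewrite fl_neg -fl_ainv => /fl_inj <-; rewrite ainvK.
have [j hj] := anti_bt h0' h0 (prc_cyc hp') (prc_cyc hp) G.
by case: hp => _ /(reducedP h0) hr _; apply: hr; exists j.
Qed.

Lemma part3d w : prac e w ->
  exists c x, [/\ prc e c, x \in images c & cyc_equiv x w].
Proof.
case=> [[hw0 [hwev [v [[hwa hor] hv]]]] hwr hwp].
have [b hb] : exists b, forall i, i < size w -> nth x0 w i = fl b i (v i, v i.+1).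
  case: hor => h; [exists false | exists true] => i hi;
    rewrite (set_nth_default (v 0, v 0)) // h //; rewrite /fl; by case: (odd i).
pose c := alt_flip b w.
have hsc : size c = size w by rewrite size_flip.
have hc_nth : forall i, i < size w -> nth x0 c i = (v i, v i.+1).
  by move=> i hi; rewrite nth_flip // hb // fl_fl.
have hcyc : is_cycle e c.
  rewrite is_cycleE; apply/and3P; split.
  - by rewrite -size_eq0 hsc -lt0n.
  - apply/(all_nthP x0) => i hi; rewrite nth_flip -?hsc // arc_fl //.
    by apply: (all_nthP x0 hwa); rewrite -hsc.
  - apply/cycle_nth; first by rewrite hsc.
    rewrite hsc => i hi; rewrite !hc_nth ?ltn_pmod //=.
    have [hl|hl] := ltnP i.+1 (size w); first by rewrite modn_small.
    have -> : i.+1 = size w by lia.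
    by rewrite modnn hv.
have fw : forall i, fs w i = fl b i (fs c i) by move=> i; rewrite /c fs_flip // fl_fl.
have hc0 : 0 < size c by rewrite hsc.
have hcr : reduced c.
  apply/reducedP => // [[i hi]]; move/(alt_reducedP hw0): hwr; apply; exists i.
  by rewrite !fw hi fl_S fl_ainv ainvK.
have [B [r [hr hcB hB hBp]]] := root_exists hcyc.
have hB0 : 0 < size B by move: hB; rewrite is_cycleE lt0n size_eq0; case/and3P.
have fB : forall i, fs c i = fs B i by move=> i; rewrite hcB fs_cpower.
have hBr : reduced B.
  apply/reducedP => // [[i hi]]; move/(reducedP hc0): hcr; apply; exists i.
  by rewrite !fB.
have hN : size w = size B * r by rewrite -hsc hcB size_cpower.
case hBo : (odd (size B)).
- have hre : ~~ odd r by move: hwev; rewrite hN oddM hBo.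
  pose k := r./2; have hrk : r = k.*2 by rewrite /k even_halfK.
  have hk0 : 0 < k by move: hr; rewrite hrk; lia.
  have fBB : forall i, fs (B ++ B) i = fs B i by move=> i; rewrite -cpower2 fs_cpower.
  have hBB : size (B ++ B) = (size B).*2 by rewrite size_cat addnn.
  have hk1 : k = 1.
    case: (ltnP 1 k) => hk1; last by lia.
    exfalso; apply: hwp; exists (alt_flip b (B ++ B)), k; split => //.
    + apply: alt_cycle_flip => //; first by rewrite -cpower2 is_cycle_cpower.
      by rewrite hBB odd_double.
    + apply: fs_eq; first by rewrite size_cpower size_flip hBB hN hrk; lia.
      move=> i; rewrite fs_cpower // fs_flip ?hBB ?odd_double //; last by lia.
      by rewrite fBB fw fB.
  exists B, (tildeC_odd B); split; first by split.
    by rewrite /images hBo inE.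
  exists (b * size B); apply: fs_eq.
    by rewrite size_rot /tildeC_odd size_flip hBB hN hrk hk1 muln2.
  move=> i; rewrite fs_rot; last by rewrite /tildeC_odd size_flip hBB; case: (b); lia.
  rewrite /tildeC_odd fs_flip ?hBB ?odd_double //; last by lia.
  rewrite fBB fs_addMN fl_addn oddM hBo andbT /= fw fB.
  by case: (b).
- have hr1 : r = 1.
    case: (ltnP 1 r) => hr1; last by lia.
    exfalso; apply: hwp; exists (alt_flip b B), r; split => //.
    + by apply: alt_cycle_flip => //; rewrite hBo.
    + apply: fs_eq; first by rewrite size_cpower size_flip.
      by move=> i; rewrite fs_cpower // fs_flip ?hBo // fw fB.
  exists B, (alt_flip b B); split; first by split.
    by rewrite /images hBo; case: (b); rewrite !inE eqxx ?orbT.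
  exists 0; rewrite rot0; apply: fs_eq; first by rewrite size_flip hN hr1 muln1.
  by move=> i; rewrite fw fB fs_flip ?hBo.
Qed.

End Parts.

End Aux.

Theorem proposition1 (T : finType) (e : rel T)
  (e_sym : symmetric e) (e_irr : irreflexive e)
  (e_conn : forall x y : T, connect e x y) :
  (* (1) even length *)
  (forall c : seq (T * T), prc e c -> ~~ odd (size c) ->
     [/\ prac e (tildeC c), size (tildeC c) = size c,
         prac e (barC c) & size (barC c) = size c]) /\
  (* (2) odd length *)
  (forall c : seq (T * T), prc e c -> odd (size c) ->
     prac e (tildeC_odd c) /\ size (tildeC_odd c) = 2 * size c) /\
  (* (3) the assignment of classes is well defined ... *)
  (forall c c' : seq (T * T), prc e c -> prc e c' -> cyc_equiv c c' ->
     forall x, x \in images c -> exists2 y, y \in images c' & cyc_equiv x y) /\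
  (* ... each even class gets exactly two distinct classes ... *)
  (forall c : seq (T * T), prc e c -> ~~ odd (size c) ->
     ~ cyc_equiv (tildeC c) (barC c)) /\
  (* ... distinct classes get disjoint images (injectivity) ... *)
  (forall (c c' : seq (T * T)) (x y : seq (T * T)), prc e c -> prc e c' ->
     x \in images c -> y \in images c' -> cyc_equiv x y -> cyc_equiv c c') /\
  (* ... and every class of prime reduced alternating cycles is hit. *)
  (forall w : seq (T * T), prac e w ->
     exists (c : seq (T * T)) (x : seq (T * T)),
       [/\ prc e c, x \in images c & cyc_equiv x w]).
Proof.
split; [|split; [|split; [|split; [|split]]]].
- by case=> [|a s] hp; [case: hp | apply: (part1 a e_sym hp)].
- by case=> [|a s] hp; [case: hp | apply: (part2 a e_sym hp)].
- by case=> [|a s] c' hp; [case: hp | apply: (part3a a hp)].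
- by case=> [|a s] hp; [case: hp | apply: (part3b a hp)].
- by case=> [|a s] c' x y hp; [case: hp | apply: (part3c a hp)].
- by case=> [|a s] hp; [by case: hp => [[]] | apply: (part3d a e_sym hp)].
Qed.
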